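(* Let $U=(U_{ij})_{i,j=1}^M$, $U_{ij}\in M_M(\mathbb C)$, and $V=(V_{ab})_{a,b=1}^N$, $V_{ab}\in M_N(\mathbb C)$, be projective models, $Q\in M_{M\times N}(\mathbb T)$, and $W=U\otimes_QV$. Then for all $p,r\geq1$, $$c_p^r(W)=\frac{1}{(MN)^r}\sum_{i,b}\Delta_U(i)\,\Delta_{V'}(b^t)\prod_{t=1}^r\prod_{s=1}^p\frac{Q_{i_s^tb_s^t}\,Q_{i_s^{t+1}b_{s+1}^t}}{Q_{i_s^tb_{s+1}^t}\,Q_{i_s^{t+1}b_s^t}},$$ where the sum is over $i=(i_s^t)\in M_{r\times p}(\{1,\dots,M\})$ and $b=(b_s^t)\in M_{r\times p}(\{1,\dots,N\})$ ($t$ = row index, $s$ = column index), the upper indices are taken modulo $r$ and lower indices modulo $p$ (so $i^{r+1}=i^1$, $b_{p+1}=b_1$), $$\Delta_U(i)=M^r\,(T_p^U)_{i_1^1\dots i_p^1,\,i_1^2\dots i_p^2}(T_p^U)_{i_1^2\dots i_p^2,\,i_1^3\dots i_p^3}\cdots(T_p^U)_{i_1^r\dots i_p^r,\,i_1^1\dots i_p^1},$$ and similarly $\Delta_{V'}(b^t)=N^p\,(T_r^{V'})_{b_1^1\dots b_1^r,\,b_2^1\dots b_2^r}\cdots(T_r^{V'})_{b_p^1\dots b_p^r,\,b_1^1\dots b_1^r}$.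
   Context: A square matrix of operators is magic if its entries are orthogonal projections and rows and columns sum to $1$. For $U=(U_{ij})_{i,j=1}^n$, $U_{ij}\in M_n(\mathbb C)$, $U'$ is given by $(U'_{kl})_{ij}=(U_{ij})_{kl}$, and $U$ is a projective model if $U$ and $U'$ are magic. $T_p^U\in M_{n^p}(\mathbb C)$ has entries $(T_p^U)_{i_1\dots i_p,j_1\dots j_p}=tr(U_{i_1j_1}\cdots U_{i_pj_p})$ with $tr$ the normalized trace, and $c_p^r(U)=Tr((T_p^U)^r)$. $W=U\otimes_QV$ is defined by $(W_{ia,jb})_{kc,ld}=\frac{Q_{ic}Q_{jd}}{Q_{id}Q_{jc}}(U_{ij})_{kl}(V_{ab})_{cd}$, with $i,j,k,l\le M$ and $a,b,c,d\le N$; $c_p^r(W)$ is defined with $n=MN$. *)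

(* Defs.v *)
From HB Require Import structures.
From mathcomp Require Import all_boot all_order all_algebra.
Set Implicit Arguments. Unset Strict Implicit. Unset Printing Implicit Defensive.
Import Order.TTheory GRing.Theory Num.Theory.
Local Open Scope ring_scope.

(* Complex scalars: an arbitrary numClosedFieldType C (e.g. C = R[i]). *)
Section Defs.
Variable C : numClosedFieldType.

Definition opmx (n : nat) := 'I_n -> 'I_n -> 'M[C]_n.

Definition adjmx (n : nat) (A : 'M[C]_n) : 'M[C]_n := (map_mx Num.conj A)^T.

Definition is_proj (n : nat) (P : 'M[C]_n) : Prop :=
  P *m P = P /\ adjmx P = P.

Definition magic (n : nat) (U : opmx n) : Prop :=
  (forall i j, is_proj (U i j)) /\
  (forall i, \sum_j U i j = 1%:M) /\
  (forall j, \sum_i U i j = 1%:M).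

Definition flipop (n : nat) (U : opmx n) : opmx n :=
  fun k l => \matrix_(i, j) U i j k l.

Definition projective_model (n : nat) (U : opmx n) : Prop :=
  magic U /\ magic (flipop U).

Definition ntr (n : nat) (A : 'M[C]_n) : C := \tr A / n%:R.

Definition Tentry (n p : nat) (U : opmx n) (ii jj : {ffun 'I_p -> 'I_n}) : C :=
  ntr (\prod_(s < p) U (ii s) (jj s)).

(* T_p^U as a matrix, indexed by multi-indices (via enumeration of 'I_n^p) *)
Definition Tmat (n p : nat) (U : opmx n) : 'M[C]_(#|{: {ffun 'I_p -> 'I_n}}|) :=
  \matrix_(x, y) Tentry U (enum_val x) (enum_val y).

Definition cpr (n p r : nat) (U : opmx n) : C := \tr ((Tmat p U) ^+ r).

(* W = U (x)_Q V; the double index (i,a) in {1..M}x{1..N} is encoded as an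
   ordinal of 'I_(#|'I_M * 'I_N|) (= 'I_(MN)) via the canonical enumeration. *)
Definition pidx (M N : nat) := 'I_(#|{: 'I_M * 'I_N}|).
Definition unp (M N : nat) (x : pidx M N) : 'I_M * 'I_N := enum_val x.

Definition qtensor (M N : nat) (U : opmx M) (V : opmx N) (Q : 'M[C]_(M, N))
  : opmx #|{: 'I_M * 'I_N}| :=
  fun x y => \matrix_(u, v)
    let: (i, a) := unp x in let: (j, b) := unp y in
    let: (k, c) := unp u in let: (l, d) := unp v in
    (Q i c * Q j d) / (Q i d * Q j c) * U i j k l * V a b c d.

Definition nxt (n : nat) (i : 'I_n) : 'I_n := ordS i.

Definition colf (r p K : nat) (b : {ffun 'I_r -> {ffun 'I_p -> 'I_K}}) (s : 'I_p)
  : {ffun 'I_r -> 'I_K} := [ffun t => b t s].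

Definition DeltaU (M p r : nat) (U : opmx M) (i : {ffun 'I_r -> {ffun 'I_p -> 'I_M}}) : C :=
  (M%:R) ^+ r * \prod_(t < r) Tentry U (i t) (i (nxt t)).

Definition DeltaV' (N p r : nat) (V : opmx N) (b : {ffun 'I_r -> {ffun 'I_p -> 'I_N}}) : C :=
  (N%:R) ^+ p * \prod_(s < p) Tentry (flipop V) (colf b s) (colf b (nxt s)).

End Defs.

(* Main.v *)
Require Import Defs.
From HB Require Import structures.
From mathcomp Require Import all_boot all_order all_algebra.
Set Implicit Arguments. Unset Strict Implicit. Unset Printing Implicit Defensive.
Import Order.TTheory GRing.Theory Num.Theory.
Local Open Scope ring_scope.

Lemma sum_bij (R : nmodType) (X Y : finType) (h : X -> Y) (g : Y -> X) :
  cancel h g -> cancel g h -> forall F : Y -> R, \sum_y F y = \sum_x F (h x).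
Proof. by move=> hg gh F; rewrite (reindex h) //; exists g => ? _. Qed.

Definition ffext (I : Type) k (f : {ffun 'I_k.+1 -> I}) (l : I) : {ffun 'I_k.+2 -> I} :=
  [ffun j : 'I_k.+2 => if (j < k.+1)%N then f (inord j) else l].

Lemma sum_ffun_recr (R : nmodType) (I : finType) k (F : {ffun 'I_k.+2 -> I} -> R) :
  \sum_f F f = \sum_(f : {ffun 'I_k.+1 -> I}) \sum_(l : I) F (ffext f l).
Proof.
rewrite pair_bigA /=.
pose h (x : {ffun 'I_k.+1 -> I} * I) := ffext x.1 x.2.
pose g (f : {ffun 'I_k.+2 -> I}) := ([ffun s : 'I_k.+1 => f (inord s)], f ord_max).
rewrite (@sum_bij _ _ _ h g) //.
- case=> f l; rewrite /g /h /ffext /=; congr (_, _).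
    apply/ffunP=> s; rewrite !ffunE inordK; last exact: ltnW (ltn_ord s).
    rewrite (_ : (s < k.+1)%N = true) ?ltn_ord //.
    by rewrite inord_val.
  by rewrite ffunE /= ltnn.
- move=> f; apply/ffunP=> j; rewrite /g /h /ffext /= !ffunE.
  case: ifP => hj; first by rewrite inordK // inord_val.
  congr (f _); apply: val_inj => /=; apply/eqP.
  have := ltn_ord j; rewrite ltnS => hj2; by rewrite eqn_leq hj2 leqNgt hj.
Qed.

Section Tr.
Variable R : comNzRingType.

Lemma prod_entry n k (A : 'I_k.+1 -> 'M[R]_n) (u v : 'I_n) :
  (\prod_(s < k.+1) A s) u v =
  \sum_(f : {ffun 'I_k.+1 -> 'I_n} | f ord0 == u)
    \prod_(s < k.+1) A s (f s) (if (s.+1 < k.+1)%N then f (inord s.+1) else v).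
Proof.
elim: k A u v => [|k IH] A u v.
  rewrite big_ord1 (big_pred1 [ffun=> u]); first by rewrite big_ord1 ffunE.
  move=> f /=; apply/eqP/eqP => [<-|->]; last by rewrite ffunE.
  by apply/ffunP=> s; rewrite ffunE (ord1 s).
rewrite big_ord_recr mxE.
transitivity (\sum_(l : 'I_n) (\sum_(f : {ffun 'I_k.+1 -> 'I_n} | f ord0 == u) \prod_(s < k.+1) A (widen_ord (leqnSn k.+1) s) (f s) (if (s.+1 < k.+1)%N then f (inord s.+1) else l)) * A ord_max l v).
  by apply: eq_bigr => l _; congr (_ * _); apply: IH.
under eq_bigr => l _ do rewrite mulr_suml.
rewrite exchange_big [RHS]big_mkcond sum_ffun_recr [LHS]big_mkcond.
apply: eq_bigr => f _.
have E l : ffext f l ord0 = f ord0.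
  by rewrite ffunE /=; congr (f _); apply: val_inj; rewrite /= inordK.
under [RHS]eq_bigr => l _ do rewrite E.
case: eqP => _; last by rewrite big1.
apply: eq_bigr => l _.
rewrite [RHS]big_ord_recr /= /ffext !ffunE /= !ltnn; congr (_ * _).
apply: eq_bigr => s _; rewrite !ffunE /=.
congr (A _ _ _); case: ifP => h; try (by case: (elimF idP h (ltn_ord s))).
  - by rewrite inord_val.
  - case: ifP => h2; last by case: (elimF idP h2 (ltn_ord s)).
    rewrite inordK // h; congr (f _); apply: val_inj; rewrite /= !inordK //.
  - case: ifP => h2; last by case: (elimF idP h2 (ltn_ord s)).
    rewrite inordK // h //.
Qed.

Lemma tr_prod n k (A : 'I_k.+1 -> 'M[R]_n) :
  \tr (\prod_(s < k.+1) A s) =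
  \sum_(f : {ffun 'I_k.+1 -> 'I_n}) \prod_(s < k.+1) A s (f s) (f (ordS s)).
Proof.
rewrite /mxtrace.
under eq_bigr => u _ do rewrite prod_entry.
rewrite (exchange_big_dep xpredT) //=.
apply: eq_bigr => f _.
rewrite (big_pred1 (f ord0)); last by move=> u /=; rewrite eq_sym.
apply: eq_bigr => s _; congr (A s _ _); case: ifP => hs; congr (f _); apply: val_inj => /=.
  by rewrite inordK // modn_small.
move: (ltn_ord s); rewrite leq_eqVlt hs orbF => /eqP ->; by rewrite modnn.
Qed.
End Tr.

Lemma trpow_sum (R : comNzRingType) (X : finType) (T : X -> X -> R) r :
  \tr ((\matrix_(x, y) T (enum_val x) (enum_val y) : 'M[R]_#|{: X}|) ^+ r.+1) =
  \sum_(ii : {ffun 'I_r.+1 -> X}) \prod_(t < r.+1) T (ii t) (ii (ordS t)).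
Proof.
rewrite -{1}(card_ord r.+1) -prodr_const tr_prod.
pose h (ii : {ffun 'I_r.+1 -> X}) := [ffun t => enum_rank (ii t)].
pose g (f : {ffun 'I_r.+1 -> 'I_#|{: X}|}) := [ffun t => enum_val (f t)].
rewrite (@sum_bij _ _ _ h g).
- by apply: eq_bigr => ii _; apply: eq_bigr => t _; rewrite mxE !ffunE !enum_rankK.
- by move=> ii; apply/ffunP => t; rewrite !ffunE enum_rankK.
- by move=> f; apply/ffunP => t; rewrite !ffunE enum_valK.
Qed.

Lemma sum_pair2 (R : nmodType) (A B I J : finType)
  (F : {ffun I -> {ffun J -> 'I_#|{: A * B}|}} -> R) :
  \sum_x F x = \sum_(f : {ffun I -> {ffun J -> A}}) \sum_(g : {ffun I -> {ffun J -> B}})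
     F [ffun t => [ffun s => enum_rank (f t s, g t s)]].
Proof.
rewrite pair_bigA /=.
pose h (x : {ffun I -> {ffun J -> A}} * {ffun I -> {ffun J -> B}}) :=
  [ffun t => [ffun s => enum_rank (x.1 t s, x.2 t s)]] : {ffun I -> {ffun J -> 'I_#|{: A * B}|}}.
pose g (y : {ffun I -> {ffun J -> 'I_#|{: A * B}|}}) :=
  ([ffun t => [ffun s => (enum_val (y t s)).1]], [ffun t => [ffun s => (enum_val (y t s)).2]]).
rewrite (@sum_bij _ _ _ h g) //.
- case=> f1 f2; rewrite /g /h /=; congr (_, _); apply/ffunP => t; apply/ffunP => s;
  by rewrite !ffunE enum_rankK.
- move=> y; apply/ffunP => t; apply/ffunP => s; rewrite /g /h !ffunE /=.
  by rewrite -surjective_pairing enum_valK.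
Qed.

Lemma sum_tr (R : nmodType) (A I J : finType) (F : {ffun I -> {ffun J -> A}} -> R) :
  \sum_f F f = \sum_(g : {ffun J -> {ffun I -> A}}) F [ffun i => [ffun j => g j i]].
Proof.
pose h (g : {ffun J -> {ffun I -> A}}) := [ffun i => [ffun j => g j i]].
pose k (f : {ffun I -> {ffun J -> A}}) := [ffun j => [ffun i => f i j]].
rewrite (@sum_bij _ _ _ h k) // => x; apply/ffunP => a; apply/ffunP => b; by rewrite !ffunE.
Qed.

Lemma expand_pow (R : fieldType) (x : R) r (F : 'I_r -> R) :
  x != 0 -> x ^+ r * \prod_(t < r) (F t / x) = \prod_(t < r) F t.
Proof.
move=> x0; rewrite big_split /= prodr_const card_ord mulrCA -exprMn mulfV //.
by rewrite expr1n mulr1.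
Qed.

Unset Implicit Arguments.

Lemma qtE (C : numClosedFieldType) (M N : nat) (U : opmx C M) (V : opmx C N) (Q : 'M[C]_(M, N))
  x1 x2 y1 y2 z1 z2 w1 w2 :
  qtensor U V Q (enum_rank (x1, x2)) (enum_rank (y1, y2)) (enum_rank (z1, z2)) (enum_rank (w1, w2)) =
  Q x1 z2 * Q y1 w2 / (Q x1 w2 * Q y1 z2) * U x1 y1 z1 w1 * V x2 y2 z2 w2.
Proof. by rewrite /qtensor mxE /unp !enum_rankK. Qed.

Theorem lemma2p7 (C : numClosedFieldType) (M N : nat)
  (U : opmx C M) (V : opmx C N) (Q : 'M[C]_(M, N))
  (hU : projective_model U) (hV : projective_model V)
  (hQ : forall i a, `|Q i a| = 1)
  (p r : nat) (hp : (0 < p)%N) (hr : (0 < r)%N) :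
  cpr p r (qtensor U V Q) =
  ((M * N)%:R ^+ r)^-1 *
  \sum_(i : {ffun 'I_r -> {ffun 'I_p -> 'I_M}})
  \sum_(b : {ffun 'I_r -> {ffun 'I_p -> 'I_N}})
    DeltaU U i * DeltaV' V b *
    \prod_(t < r) \prod_(s < p)
      ((Q (i t s) (b t s) * Q (i (nxt t) s) (b t (nxt s))) /
       (Q (i t s) (b t (nxt s)) * Q (i (nxt t) s) (b t s))).
Proof.
case: p hp => // p _; case: r hr => // r _.
rewrite /cpr /Tmat trpow_sum.
have hn : (#|{: 'I_M * 'I_N}|%:R : C) = (M * N)%:R by rewrite card_prod !card_ord.
under eq_bigr => ii _ do under eq_bigr => t _ do rewrite /Tentry /ntr tr_prod hn.
under eq_bigr => ii _ do rewrite big_split /= prodr_const card_ord exprVn.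
rewrite -mulr_suml mulrC; congr (_ * _).
under eq_bigr => ii _ do rewrite bigA_distr_bigA /=.
rewrite sum_pair2; apply: eq_bigr => i _.
have M0 : (M%:R : C) != 0.
  rewrite pnatr_eq0 -lt0n; case: (i ord0 ord0) => m hm; exact: leq_ltn_trans (leq0n m) hm.
have DU : DeltaU U i = \sum_(k : {ffun 'I_r.+1 -> {ffun 'I_p.+1 -> 'I_M}})
   \prod_(t < r.+1) \prod_(s < p.+1) U (i t s) (i (ordS t) s) (k t s) (k t (ordS s)).
  rewrite /DeltaU /nxt.
  under eq_bigr => t _ do rewrite /Tentry /ntr tr_prod.
  by rewrite expand_pow // bigA_distr_bigA.
have DV b : DeltaV' V b = \sum_(a : {ffun 'I_r.+1 -> {ffun 'I_p.+1 -> 'I_N}})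
   \prod_(t < r.+1) \prod_(s < p.+1) V (a t s) (a (ordS t) s) (b t s) (b t (ordS s)).
  have N0 : (N%:R : C) != 0.
    rewrite pnatr_eq0 -lt0n; case: (b ord0 ord0) => m hm; exact: leq_ltn_trans (leq0n m) hm.
  rewrite /DeltaV' /nxt /colf.
  under eq_bigr => s _ do rewrite /Tentry /ntr tr_prod.
  rewrite expand_pow // bigA_distr_bigA sum_tr; apply: eq_bigr => g _.
  rewrite exchange_big /=; apply: eq_bigr => s _; apply: eq_bigr => t _.
  by rewrite /flipop !mxE !ffunE.
under [RHS]eq_bigr => b _ do rewrite DU DV.
apply: eq_trans; first by apply: eq_bigr => g _; apply: sum_pair2.
rewrite /nxt [LHS]exchange_big /=.
under [LHS]eq_bigr => k _ do rewrite exchange_big /=.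
rewrite [LHS]exchange_big /=.
apply: eq_bigr => b _; rewrite mulr_suml mulr_suml; apply: eq_bigr => k _.
rewrite mulr_sumr mulr_suml; apply: eq_bigr => a _.
rewrite -!big_split /=; apply: eq_bigr => t _; rewrite -!big_split /=; apply: eq_bigr => s _.
rewrite !ffunE qtE.
by rewrite -[LHS]mulrA [LHS]mulrC.
Qed.
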